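(* Let $\Gamma\in\mathbb{R}^{n\times m}$ and let $R:\mathbb{R}^n_{\ge0}\to\mathbb{R}^m$ be locally Lipschitz, such that the system $\dot S=\Gamma R(S)$ leaves $\mathbb{R}^n_{\ge0}$ invariant and is forward complete (every solution starting in $\mathbb{R}^n_{\ge0}$ is defined and stays in $\mathbb{R}^n_{\ge0}$ for all $t\ge0$). Fix $\sigma\in\mathbb{R}^n_{\ge0}$ and consider $\dot x=R(\sigma+\Gamma x)$ on $X_\sigma=\{x\in\mathbb{R}^m:\sigma+\Gamma x\ge0\}$. Then every solution of this system with initial condition in $X_\sigma$ is defined for all $t\ge0$ and remains in $X_\sigma$. Furthermore, if every solution of $\dot S=\Gamma R(S)$ in $\mathbb{R}^n_{\ge0}$ is bounded, then for every solution $x(t)$ of $\dot x=R(\sigma+\Gamma x)$ on $X_\sigma$, $\Gamma x(t)$ is bounded for $t\ge0$.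
   Context: Inequalities between vectors are componentwise. *)

(* Defs.v *)
From HB Require Import structures.
From mathcomp Require Import all_boot all_order all_algebra.
From mathcomp Require Import all_classical all_reals all_analysis.
Set Implicit Arguments. Unset Strict Implicit. Unset Printing Implicit Defensive.
Import Order.TTheory GRing.Theory Num.Theory.
Import numFieldNormedType.Exports.
Local Open Scope classical_set_scope.
Local Open Scope ring_scope.

Definition nonneg {R : realType} {n : nat} (v : 'cV[R]_n) : Prop :=
  forall i : 'I_n, 0 <= v i ord0.

Definition loc_lipschitz_on {R : realType} {n m : nat}
  (D : set 'cV[R]_n) (f : 'cV[R]_n -> 'cV[R]_m) : Prop :=
  forall p, D p -> exists2 r : R, 0 < r & exists L : R,
    forall u v, D u -> D v -> `|u - p| < r -> `|v - p| < r ->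
      `|f u - f v| <= L * `|u - v|.

(* x : J -> D is a solution of x' = F x on the time set J (an interval
   starting at 0): x stays in D, is continuous on J and differentiable
   with derivative F (x t) at every t in J with t > 0 (interior points). *)
Definition ode_sol {R : realType} {k : nat} (F : 'cV[R]_k -> 'cV[R]_k)
  (D : set 'cV[R]_k) (J : set R) (x : R -> 'cV[R]_k) : Prop :=
  (forall t, J t -> D (x t)) /\ {within J, continuous x} /\
  (forall t, J t -> 0 < t -> is_derive t 1 x (F (x t))).

(* "every solution is defined for all t >= 0 and stays in D" :
   from every initial point in D there is a solution on [0,+oo[, and every
   solution on a finite interval [0,T[ extends to a solution on [0,+oo[. *)
Definition forward_complete {R : realType} {k : nat}
  (F : 'cV[R]_k -> 'cV[R]_k) (D : set 'cV[R]_k) : Prop :=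
  (forall x0, D x0 -> exists x, ode_sol F D `[0, +oo[%classic x /\ x 0 = x0) /\
  (forall (T : R) x, 0 < T -> ode_sol F D `[0, T[%classic x ->
     exists y, ode_sol F D `[0, +oo[%classic y /\ (forall t, `[0, T[%classic t -> y t = x t)).

(* Main.v *)
Require Import Defs.
From HB Require Import structures.
From mathcomp Require Import all_boot all_order all_algebra.
From mathcomp Require Import all_classical all_reals all_analysis.
Import Order.TTheory GRing.Theory Num.Theory.
Import numFieldNormedType.Exports.
Local Open Scope classical_set_scope.
Local Open Scope ring_scope.

Section H.
Context {R : realType}.

Lemma entry_le p q (v : 'M[R]_(p, q)) i j : `|v i j| <= `|v|.
Proof.
rewrite [leRHS]/Num.Def.normr/= mx_normrE.
exact: (le_bigmax _ _ (i, j)).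
Qed.

Lemma mulmx_bound p q r (G : 'M[R]_(p, q)) :
  exists2 C : R, 0 <= C & forall v : 'M[R]_(q, r), `|G *m v| <= C * `|v|.
Proof.
exists (\sum_i \sum_k `|G i k|); first by apply: sumr_ge0 => i _; apply: sumr_ge0.
move=> v; rewrite [leLHS]/Num.Def.normr/= mx_normrE.
apply: bigmax_le => [|[i j] _ /=]; first by apply: mulr_ge0 => //; apply: sumr_ge0 => ? _; apply: sumr_ge0.
rewrite mxE (le_trans (ler_norm_sum _ _ _))//.
apply: (@le_trans _ _ ((\sum_k `|G i k|) * `|v|)).
  rewrite mulr_suml; apply: ler_sum => k _; rewrite normrM ler_wpM2l//.
  exact: entry_le.
rewrite ler_wpM2r//; rewrite (bigD1 i)//= lerDl; apply: sumr_ge0 => ? _; apply: sumr_ge0 => ? _ //.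
Qed.

Lemma mulmx_cont p q r (G : 'M[R]_(p, q)) : continuous (fun v : 'M[R]_(q, r) => G *m v).
Proof.
have [C C0 HC] := @mulmx_bound p q r G.
move=> v; apply/(@cvgrPdist_lt _ _ _ _ (nbhs_filter v)) => e e0.
near=> u.
rewrite -mulmxBr (le_lt_trans (HC _))//.
have : `|v - u| < e / (C + 1).
  near: u; apply: ((@cvgrPdist_lt _ _ _ _ (nbhs_filter v) id v).1 cvg_id); by rewrite divr_gt0// ltr_wpDl.
move=> H; apply: (@le_lt_trans _ _ ((C + 1) * `|v - u|)).
  by rewrite ler_wpM2r// lerDl.
by rewrite mulrC -ltr_pdivlMr ?ltr_wpDl.
Unshelve. all: by end_near. Qed.


Lemma is_derive_entry p q (M : R -> 'M[R]_(p, q))(t : R) (dM : 'M[R]_(p, q)) i j :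
  is_derive t (1:R) M dM -> is_derive t (1:R) (fun s => M s i j) (dM i j).
Proof.
move=> [dv dval]; have dvij := (derivable_mxP M t 1).1 dv i j.
apply: DeriveDef => //.
by rewrite -dval derive_mx // mxE.
Qed.

Lemma is_derive_mx p q (M : R -> 'M[R]_(p, q))(t : R) (dM : 'M[R]_(p, q)) :
  (forall i j, is_derive t (1:R) (fun s => M s i j) (dM i j)) -> is_derive t (1:R) M dM.
Proof.
move=> H.
have dv : derivable M t 1 by apply/derivable_mxP => i j; case: (H i j).
apply: DeriveDef => //.
rewrite derive_mx //; apply/matrixP => i j; rewrite mxE.
by case: (H i j).
Qed.

Lemma is_derive_mulmx p q r (G : 'M[R]_(p, q)) (x : R -> 'M[R]_(q, r)) (t : R) dx :
  is_derive t (1:R) x dx -> is_derive t (1:R) (fun s => G *m x s) (G *m dx).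
Proof.
move=> H; apply: is_derive_mx => i j.
have -> : (fun s => (G *m x s) i j) = \sum_(k < q) (fun s => G i k *: x s k j).
  by apply/funext => s; rewrite mxE fct_sumE.
rewrite mxE.
apply: is_derive_sum => k.
have -> : (fun s => G i k *: x s k j) = G i k \*: (fun s => x s k j) by [].
exact/is_deriveZ/is_derive_entry.
Qed.

Lemma is_derive_cont (W : normedModType R) (f : R -> W) (t : R) df :
  is_derive t (1:R) f df -> {for t, continuous f}.
Proof.
by move=> [dv _]; apply/differentiable_continuous/derivable1_diffP.
Qed.


Lemma zero_deriv_const p q (f : R -> 'M[R]_(p, q)) (b : R) : 0 <= b ->
  {within `[0, b], continuous f} ->
  (forall t, 0 < t -> t < b -> is_derive t (1:R) f 0) -> f b = f 0.
Proof.
move=> b0 cf df; apply/matrixP => i j.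
have [||c _] := @MVT_segment R (fun s => f s i j) (fun _ => 0) 0 b b0.
- move=> t; rewrite in_itv/= => /andP[t0 tb].
  by have := @is_derive_entry _ _ f t 0 i j (df t t0 tb); rewrite mxE.
- apply: (@within_continuous_comp _ _ _ _ f (fun M : 'M[R]_(p, q) => M i j)) => //.
  by move=> M _; apply: coord_continuous.
- by rewrite mul0r => /eqP; rewrite subr_eq0 => /eqP.
Qed.

Lemma max_cont : continuous (fun t : R => Num.max t (0:R)).
Proof.
move=> t; exact: (@continuous_max R R (fun s : R => s : R^o) (fun _ => (0 : R^o)) t cvg_id (cvg_cst _)).
Qed.

Lemma ext_cont (W : normedModType R) (g : R -> W) :
  {within `[0, +oo[, continuous g} -> continuous (fun t => g (Num.max t (0:R))).
Proof.
move=> /subspace_continuousP cg t.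
have A0 : `[0, +oo[%classic (Num.max t (0:R)) by rewrite /= in_itv/= andbT le_max lexx orbT.
apply: cvg_trans (cg _ A0).
suff H : (fun s => Num.max s (0:R)) @ nbhs t --> within `[0, +oo[ (nbhs (Num.max t (0:R))).
  exact: (cvg_app g H).
move=> P /= HP.
rewrite nbhs_filterE /within in HP.
have := max_cont t _ HP; rewrite /= nbhs_simpl => H.
move: H; apply: (@filterS _ (nbhs t)) => s /= H; apply: H.
by rewrite in_itv/= andbT le_max lexx orbT.
Qed.


Lemma FTC_entry (f : R -> R) (t : R) : continuous f -> 0 <= t ->
  is_derive t (1:R) (fun s => (\int[@lebesgue_measure R]_(u in `[-1, s]) f u)%R) (f t).
Proof.
move=> cf t0.
have [] := @continuous_FTC1_closed R f (-1) t (t + 1).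
- by rewrite ltrDl.
- apply: continuous_compact_integrable; first exact: segment_compact.
  exact: continuous_subspaceT.
- by rewrite (lt_le_trans _ t0)// ltrN10.
- exact: cf.
move=> dv dval; apply: DeriveDef => //.
by rewrite -derive1E.
Qed.

Lemma primitive p (g : R -> 'cV[R]_p) (x0 : 'cV[R]_p) : continuous g ->
  exists x : R -> 'cV[R]_p, x 0 = x0 /\ forall t : R, 0 <= t -> is_derive t (1:R) x (g t).
Proof.
move=> cg.
pose F i s := (\int[@lebesgue_measure R]_(u in `[-1, s]) g u i ord0)%R.
exists (fun s => x0 + \col_i (F i s - F i 0)); split.
  by apply/matrixP => i j; rewrite !mxE subrr addr0.
move=> t t0; apply: is_derive_mx => i j.
rewrite [j]ord1.
have -> : (fun s => (x0 + \col_k (F k s - F k 0)) i ord0) = cst (x0 i ord0) + (F i - cst (F i 0)).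
  by apply/funext => s; rewrite !mxE.
have cgi : continuous (fun u => g u i ord0).
  move=> u; apply: (@continuous_comp _ _ _ g (fun M : 'cV[R]_p => M i ord0)); [exact: cg| exact: coord_continuous].
have H := @FTC_entry _ t cgi t0.
rewrite -[g t i ord0]add0r -[g t i ord0]subr0.
apply: is_deriveD.
Qed.

Lemma comp_lip_cont n m (Rf : 'cV[R]_n -> 'cV[R]_m) (J : set R) (S : R -> 'cV[R]_n) :
  loc_lipschitz_on (@nonneg R n) Rf -> (forall t, J t -> nonneg (S t)) ->
  {within J, continuous S} -> {within J, continuous (fun t => Rf (S t))}.
Proof.
move=> Hlip SJ /subspace_continuousP cS; apply/subspace_continuousP => t Jt.
have /cvgrPdist_lt cSt := cS t Jt.
have [r r0 [L HL]] := Hlip (S t) (SJ t Jt).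
apply/cvgrPdist_lt => e e0.
have eL : 0 < Num.min r (e / (`|L| + 1)).
  by rewrite lt_min r0 divr_gt0// ltr_wpDl.
near=> s.
have Js : J s by near: s; apply: withinT.
have Hs : `|S t - S s| < Num.min r (e / (`|L| + 1)).
  by near: s; exact: (cSt _ eL).
move: Hs; rewrite lt_min => /andP[Hr He].
have := HL (S t) (S s) (SJ t Jt) (SJ s Js).
rewrite subrr normr0 distrC => /(_ r0 Hr) H.
apply: (le_lt_trans H).
apply: (@le_lt_trans _ _ ((`|L| + 1) * `|S t - S s|)).
  by apply: ler_wpM2r => //; rewrite (le_trans (ler_norm L))// lerDl.
by rewrite mulrC -ltr_pdivlMr ?ltr_wpDl.
Unshelve. all: by end_near. Qed.


Lemma sol_shift n m (Gam : 'M[R]_(n, m)) (Rf : 'cV[R]_n -> 'cV[R]_m) sigma J x :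
  ode_sol (fun x => Rf (sigma + Gam *m x)) [set x | nonneg (sigma + Gam *m x)] J x ->
  ode_sol (fun S => Gam *m Rf S) (@nonneg R n) J (fun t => sigma + Gam *m x t).
Proof.
case=> [HD [Hc Hd]]; split; first exact: HD.
split.
  apply: (@within_continuous_comp _ _ _ _ x (fun v => sigma + Gam *m v)); last exact: Hc.
  move=> v _.
  apply: continuousD; [exact: cst_continuous| exact: mulmx_cont].
move=> t Jt t0.
have H := @is_derive_mulmx _ _ _ Gam _ _ _ (Hd t Jt t0).
have -> : (fun s => sigma + Gam *m x s) = cst sigma + (fun s => Gam *m x s) by [].
rewrite -[X in is_derive _ _ _ X]add0r.
exact: is_deriveD.
Qed.

Lemma in0y (t : R) : `[0, +oo[%classic t = (0 <= t).
Proof. by rewrite /= in_itv /= andbT. Qed.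

Lemma build n m (Gam : 'M[R]_(n, m)) (Rf : 'cV[R]_n -> 'cV[R]_m) sigma
  (Hlip : loc_lipschitz_on (@nonneg R n) Rf) S x0 :
  ode_sol (fun S => Gam *m Rf S) (@nonneg R n) `[0, +oo[%classic S ->
  S 0 = sigma + Gam *m x0 ->
  exists y, ode_sol (fun x => Rf (sigma + Gam *m x)) [set x | nonneg (sigma + Gam *m x)]
                    `[0, +oo[%classic y /\ y 0 = x0 /\
            (forall t, 0 <= t -> sigma + Gam *m y t = S t).
Proof.
case=> [SD [Sc Sd]] S0.
pose g t := Rf (S (Num.max t 0)).
have cg : continuous g := @ext_cont _ _ (@comp_lip_cont _ _ _ _ _ Hlip SD Sc).
have [y [y0 yd]] := @primitive _ g x0 cg.
have yc : forall t : R, 0 <= t -> {for t, continuous y}.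
  by move=> t t0; exact: is_derive_cont (yd t t0).
have gE : forall t : R, 0 <= t -> g t = Rf (S t).
  by move=> t t0; rewrite /g max_l.
have key : forall t, 0 <= t -> sigma + Gam *m y t = S t.
  move=> b b0.
  pose h s := sigma + Gam *m y s - S s.
  suff : h b = h 0 by rewrite /h y0 S0 subrr => /eqP; rewrite subr_eq0 => /eqP.
  apply: zero_deriv_const b0 _ _.
  - apply: (@within_continuousB _ _ _ _ (fun s => sigma + Gam *m y s) S).
      apply: continuous_in_subspaceT => s; rewrite inE /= in_itv /= => /andP[s0 _].
      apply: (@continuousD R _ _ (cst sigma) (fun s1 => Gam *m y s1)); first exact: cst_continuous.
      exact: (@continuous_comp _ _ _ y (fun v => Gam *m v) _ (yc s s0) (@mulmx_cont _ _ 1 Gam (y s))).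
    apply: continuous_subspaceW Sc => s /=; rewrite !in_itv /= andbT => /andP[].
    done.
  - move=> s s0 sb.
    have H := @is_derive_mulmx _ _ _ Gam _ _ _ (yd s (ltW s0)).
    have Hs := Sd s _ s0.
    rewrite in0y in Hs; have {}Hs := Hs (ltW s0).
    have -> : h = cst sigma + (fun s => Gam *m y s) - S by [].
    apply: is_derive_eq.
    by rewrite gE ?(ltW s0)// add0r subrr.
exists y; split; last by split.
split.
  by move=> t; rewrite in0y => t0; rewrite /= key//; apply: SD; rewrite in0y.
split.
  by apply: continuous_in_subspaceT => t; rewrite inE in0y => t0; exact: yc.
move=> t; rewrite in0y => t0 tp.
by rewrite key// -gE//; exact: yd.
Qed.

End H.

Theorem lemma4 (R : realType) (n m : nat) (Gam : 'M[R]_(n, m))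
  (Rf : 'cV[R]_n -> 'cV[R]_m)
  (Hlip : loc_lipschitz_on (@nonneg R n) Rf)
  (Hfc : forward_complete (fun S => Gam *m Rf S) (@nonneg R n))
  (sigma : 'cV[R]_n) (Hsigma : nonneg sigma) :
  forward_complete (fun x => Rf (sigma + Gam *m x))
                   [set x | nonneg (sigma + Gam *m x)] /\
  ((forall S, ode_sol (fun S => Gam *m Rf S) (@nonneg R n) `[0, +oo[%classic S ->
       exists M : R, forall t, 0 <= t -> `|S t| <= M) ->
   forall x, ode_sol (fun x => Rf (sigma + Gam *m x))
                     [set x | nonneg (sigma + Gam *m x)] `[0, +oo[%classic x ->
       exists M : R, forall t, 0 <= t -> `|Gam *m x t| <= M).
Proof.
case: Hfc => [Hfc1 Hfc2].
split; first split.
- move=> x0 Hx0.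
  have [S [HS S0]] := Hfc1 _ Hx0.
  have [y [Hy [y0 _]]] := @build _ _ _ Gam Rf sigma Hlip _ _ HS S0.
  by exists y.
- move=> T x T0 Hx.
  have HS := @sol_shift _ _ _ Gam Rf sigma _ _ Hx.
  have [S' [HS' S'E]] := Hfc2 T _ T0 HS.
  have T0' : `[0, T[%classic (0:R) by rewrite /= in_itv /= lexx.
  have S'0 : S' 0 = sigma + Gam *m x 0 by rewrite S'E.
  have [y [Hy [y0 yE]]] := @build _ _ _ Gam Rf sigma Hlip _ _ HS' S'0.
  exists y; split => // t.
  rewrite /= in_itv /= => /andP[t0 tT].
  have Hxd := Hx.
  case: Hx => [xD [xc xd]].
  case: Hy => [yD [yc yd]].
  suff : (y - x) t = (y - x) 0 by rewrite !fctE y0 subrr => /eqP; rewrite subr_eq0 => /eqP.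
  apply: zero_deriv_const t0 _ _.
  - apply: within_continuousB.
      apply: continuous_subspaceW yc => s /=; rewrite !in_itv /= andbT => /andP[] //.
    apply: continuous_subspaceW xc => s /=; rewrite !in_itv /= => /andP[s0 st].
    by rewrite s0 (le_lt_trans st tT).
  - move=> s s0 st.
    have sT : `[0, T[%classic s by rewrite /= in_itv /= (ltW s0) (lt_trans st tT).
    have Hy' := yd s _ s0; rewrite in0y in Hy'; have {}Hy' := Hy' (ltW s0).
    have Hx' := xd s sT s0.
    have H := is_deriveB Hy' Hx'; apply: (is_derive_eq H).
    by rewrite yE ?(ltW s0)// S'E// subrr.
- move=> Hb x Hx.
  have [M HM] := Hb _ (@sol_shift _ _ _ Gam Rf sigma _ _ Hx).
  exists (M + `|sigma|) => t t0.
  have -> : Gam *m x t = (sigma + Gam *m x t) - sigma by rewrite addrC addKr.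
  by rewrite (le_trans (ler_normB _ _))// lerD2r HM.
Qed.
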